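(* Let $\Gamma$ be a metrized graph that is a tree with $v \geq 5$ vertices, and let $k$ be an integer with $1 \leq k \leq v-4$. Then $$W(\Gamma)= \frac{(v-4-k)!}{(v-4)!}\sum_{e_{i_1} \in E(\Gamma)} \sum_{e_{i_2} \in E(\overline{\Gamma}_{i_1})}\cdots\sum_{e_{i_k} \in E(\overline{\Gamma}_{i_1, \dots, i_{k-1}})} W(\overline{\Gamma}_{i_1,\dots, i_k}) -\frac{\big(v^2-(k+2)v+k-1 \big)k}{(v-k-2)(v-k-3) }\,\ell(\Gamma).$$ In particular, for $k=v-4$, $$W(\Gamma)= \frac{1}{(v-4)!}\sum_{e_{i_1} \in E(\Gamma)}\cdots\sum_{e_{i_{v-4}} \in E(\overline{\Gamma}_{i_1, \dots, i_{v-5}})} W(\overline{\Gamma}_{i_1,\dots, i_{v-4}}) -\frac{(3v-5)(v-4)}{2}\,\ell(\Gamma).$$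
   Context: A metrized graph is a finite connected graph each of whose edges is identified with a closed segment of positive length; its vertex set $V(\Gamma)$ is a finite nonempty set containing every point of valence $\neq 2$, $v=\#V(\Gamma)$, and $E(\Gamma)$ is its edge set. $\ell(\Gamma)$ is the total length. The Wiener index is $W(\Gamma)=\frac12\sum_{p,q\in V(\Gamma)}d(p,q)$ with $d$ the path distance. $\overline\Gamma_{i_1,\dots,i_k}$ is the tree obtained by successively contracting to a point the edge $e_{i_1}\in E(\Gamma)$, then $e_{i_2}\in E(\overline\Gamma_{i_1})$, and so on, with vertex sets the images of $V(\Gamma)$; the sums run over all such ordered choices of edges. *)

(* Defs.v *)
From mathcomp Require Import all_boot all_order all_algebra.
From mathcomp Require Import boolp classical_sets reals.
Set Implicit Arguments. Unset Strict Implicit. Unset Printing Implicit Defensive.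
Import Order.TTheory GRing.Theory Num.Theory.
Local Open Scope ring_scope.
Local Open Scope classical_set_scope.

(* A (combinatorial model of a) metrized graph: a list of vertex labels and a
   list of edges (a, b, len) joining vertices a and b by a segment of length len. *)
Record mgraph (R : realType) := MGraph {
  mverts : seq nat;
  medges : seq (nat * nat * R) }.

Section MG.
Variable R : realType.
Implicit Types G : mgraph R.

Definition edge0 : nat * nat * R := (0%N, 0%N, 0).
Definition edge_at G (j : nat) := nth edge0 (medges G) j.

Fixpoint is_walk (E : seq (nat * nat * R)) (p q : nat) (s : seq nat) : bool :=
  match s with
  | [::] => p == q
  | j :: s' =>
      let: (a, b, _) := nth edge0 E j in
      (j < size E)%N &&
      (((a == p) && is_walk E b q s') || ((b == p) && is_walk E a q s'))
  end.

Definition walk_len (E : seq (nat * nat * R)) (s : seq nat) : R :=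
  \sum_(j <- s) (nth edge0 E j).2.

Definition dist G (p q : nat) : R :=
  inf [set x : R | exists s, is_walk (medges G) p q s /\ x = walk_len (medges G) s].

Definition wiener G : R :=
  2^-1 * \sum_(p <- mverts G) \sum_(q <- mverts G) dist G p q.

Definition total_length G : R := \sum_(e <- medges G) e.2.

Definition nverts G : nat := size (mverts G).

Definition is_metrized_tree G : Prop :=
  [/\ uniq (mverts G),
      all (fun e : nat * nat * R =>
             [&& e.1.1 \in mverts G, e.1.2 \in mverts G, e.1.1 != e.1.2 & 0 < e.2])
          (medges G),
      (forall p q, p \in mverts G -> q \in mverts G ->
          exists s, is_walk (medges G) p q s)
    & size (medges G) = (size (mverts G)).-1 ].

Definition contract G (j : nat) : mgraph R :=
  let: (a, b, _) := edge_at G j in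
  let ren x := if x == b then a else x in
  MGraph (undup (map ren (mverts G)))
         (map (fun e : nat * nat * R => (ren e.1.1, ren e.1.2, e.2))
              (take j (medges G) ++ drop j.+1 (medges G))).

Fixpoint iter_contr_sum (k : nat) G : R :=
  match k with
  | 0%N => wiener G
  | k'.+1 => \sum_(j < size (medges G)) iter_contr_sum k' (contract G j)
  end.

End MG.

(* Main.v *)
Require Import Defs.
From mathcomp Require Import all_boot all_order all_algebra.
From mathcomp Require Import boolp classical_sets reals.
From mathcomp Require Import zify ring lra.
Import Order.TTheory GRing.Theory Num.Theory.
Local Open Scope ring_scope.

Module Aux.
Set Implicit Arguments. Unset Strict Implicit. Unset Printing Implicit Defensive.

Section Conn.
Variable R : realType.
Notation edge := (nat * nat * R)%type.
Implicit Types (E L : seq edge) (e : edge).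

Definition adj E x y := exists2 e, e \in E &
  ((e.1.1 = x /\ e.1.2 = y) \/ (e.1.2 = x /\ e.1.1 = y)).

Inductive conn E : nat -> nat -> Prop :=
| conn0 x : conn E x x
| connS x y z : adj E x y -> conn E y z -> conn E x z.

Lemma adj_sym E x y : adj E x y -> adj E y x.
Proof. by case=> e eE [[<- <-]|[<- <-]]; exists e => //; [right|left]. Qed.

Lemma conn1 E x y : adj E x y -> conn E x y.
Proof. by move=> h; apply: connS h (conn0 _ _). Qed.

Lemma conn_trans E x y z : conn E x y -> conn E y z -> conn E x z.
Proof. by elim=> // a b c h _ IH /IH; apply: connS. Qed.

Lemma conn_sym E x y : conn E x y -> conn E y x.
Proof.
elim=> [a|a b c h _ IH]; first exact: conn0.
exact: conn_trans IH (conn1 (adj_sym h)).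
Qed.

Lemma adj_sub E L x y : {subset E <= L} -> adj E x y -> adj L x y.
Proof. by move=> s [e /s eL h]; exists e. Qed.

Lemma conn_sub E L x y : {subset E <= L} -> conn E x y -> conn L x y.
Proof.
move=> s; elim=> [a|a b c h _ IH]; first exact: conn0.
exact: connS (adj_sub s h) IH.
Qed.

Lemma conn_eqmem E L x y : E =i L -> conn E x y -> conn L x y.
Proof. by move=> eq; apply: conn_sub => z; rewrite eq. Qed.

Lemma is_walk_cons E p q j s :
  is_walk E p q (j :: s) =
  let: (a, b, _) := nth (edge0 R) E j in
      (j < size E)%N &&
      (((a == p) && is_walk E b q s) || ((b == p) && is_walk E a q s)).
Proof. by []. Qed.

Lemma is_walk_cat E p q s1 s2 :
  is_walk E p q (s1 ++ s2) <-> exists m, is_walk E p m s1 /\ is_walk E m q s2.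
Proof.
elim: s1 p => [|j s1 IH] p /=.
  by split; [move=> h; exists p | case=> m [/eqP -> ]].
case: (nth (edge0 R) E j) => [[a b] l].
split.
  case/andP=> js /orP [/andP [/eqP <- /IH [m [h1 h2]]]|/andP [/eqP <- /IH [m [h1 h2]]]];
    exists m; split=> //; rewrite js ?eqxx ?h1 ?orbT //.
case=> m [/andP [js /orP [/andP [ap h1]|/andP [bp h1]]] h2]; rewrite js /=.
  by rewrite ap (proj2 (IH b)) //; exists m.
by rewrite bp (proj2 (IH a)) ?orbT //; exists m.
Qed.

Lemma is_walk1 E p q j :
  is_walk E p q [:: j] <->
  (j < size E)%N /\ (((nth (edge0 R) E j).1.1 = p /\ (nth (edge0 R) E j).1.2 = q) \/
                     ((nth (edge0 R) E j).1.2 = p /\ (nth (edge0 R) E j).1.1 = q)).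
Proof.
rewrite /=; case: (nth (edge0 R) E j) => [[a b] l] /=.
split.
  case/andP=> -> /orP [/andP[/eqP -> /eqP ->]|/andP[/eqP -> /eqP ->]].
    by split=> //; left.
  by split=> //; right.
by case=> -> [[-> ->]|[-> ->]]; rewrite !eqxx ?orbT.
Qed.

Lemma is_walk_conn E p q s :
  is_walk E p q s -> conn [seq nth (edge0 R) E i | i <- s] p q.
Proof.
elim: s p => [|j s IH] p /=; first by move/eqP ->; exact: conn0.
case eq: (nth (edge0 R) E j) => [[a b] l] /=.
case/andP=> _ /orP [/andP [/eqP <- /IH h]|/andP [/eqP <- /IH h]].
  apply: connS (conn_sub _ h); last by move=> z zs; rewrite inE zs orbT.
  by exists (a, b, l); [exact: mem_head | left].
apply: connS (conn_sub _ h); last by move=> z zs; rewrite inE zs orbT.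
by exists (a, b, l); [exact: mem_head | right].
Qed.

Lemma is_walk_idx E p q s : is_walk E p q s -> all (fun i => i < size E)%N s.
Proof.
elim: s p => [|j s IH] p //=.
case: (nth (edge0 R) E j) => [[a b] l] /=.
by case/andP=> -> /orP [/andP [_ /IH]|/andP [_ /IH]].
Qed.

Lemma conn_walk E p q : conn E p q -> exists s, is_walk E p q s.
Proof.
elim=> [x|x y z [e eE h] _ [s hs]]; first by exists [::] => /=.
exists (index e E :: s); rewrite is_walk_cons nth_index // index_mem eE /=.
by case: e {eE} h => [[a b] l] /= [[-> ->]|[-> ->]]; rewrite hs !eqxx ?orbT.
Qed.

End Conn.


Section Ren.
Variable R : realType.
Notation edge := (nat * nat * R)%type.
Implicit Types (E L : seq edge) (e : edge).

Definition ren (a b x : nat) := if x == b then a else x.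
Definition renE (a b : nat) (e : edge) : edge := (ren a b e.1.1, ren a b e.1.2, e.2).

Variables (a b : nat) (l : R).

Lemma ren_conn L x y : ren a b x = ren a b y -> conn ((a, b, l) :: L) x y.
Proof.
have ab : adj ((a, b, l) :: L) a b by exists (a, b, l); [exact: mem_head | left].
rewrite /ren; case: eqP => [->|xb]; case: eqP => [->|yb] //.
- by move=> _; exact: conn0.
- by move=> <-; apply: conn1; exact: adj_sym.
- by move=> ->; apply: conn1.
- by move=> ->; exact: conn0.
Qed.

Lemma conn_ren L x y : conn ((a, b, l) :: L) x y ->
  conn [seq renE a b e | e <- L] (ren a b x) (ren a b y).
Proof.
elim=> [z|x1 y1 z1 [e]]; first exact: conn0.
rewrite inE => /orP [/eqP ->|eL] h _ IH.
  apply: conn_trans IH; suff -> : ren a b x1 = ren a b y1 by exact: conn0.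
  by case: h => /= [[<- <-]|[<- <-]]; rewrite /ren eqxx; case: eqP.
apply: connS IH; exists (renE a b e); first exact: map_f.
by case: h => [[<- <-]|[<- <-]]; [left|right].
Qed.

Lemma ren_conn_inv L u w : conn [seq renE a b e | e <- L] u w ->
  forall x y, ren a b x = u -> ren a b y = w -> conn ((a, b, l) :: L) x y.
Proof.
elim=> [z|u1 v1 w1 [e' /mapP [e eL ->] h] _ IH] x y.
  by move=> <- /eqP; rewrite eq_sym => /eqP /ren_conn.
move=> xu yw.
have step : adj ((a, b, l) :: L) e.1.1 e.1.2.
  by exists e; [rewrite inE eL orbT | left].
case: h => /= [[h1 h2]|[h1 h2]].
- apply: conn_trans (ren_conn _ _) _; first by rewrite xu -h1.
  apply: connS step _; exact: IH.
- apply: conn_trans (ren_conn _ _) _; first by rewrite xu -h1.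
  apply: connS (adj_sym step) _; exact: IH.
Qed.

Lemma ren_mem V x : b \in V -> a \in V -> a != b ->
  (x \in undup [seq ren a b y | y <- V]) = (x \in V) && (x != b).
Proof.
move=> bV aV ab; rewrite mem_undup; apply/mapP/andP.
  case=> y yV ->; rewrite /ren; case: eqP => [_|/eqP yb]; first by split.
  by split.
case=> xV xb; exists x => //; by rewrite /ren (negbTE xb).
Qed.

Lemma ren_perm V : uniq V -> b \in V -> a \in V -> a != b ->
  perm_eq (undup [seq ren a b y | y <- V]) (rem b V).
Proof.
move=> uV bV aV ab; apply: uniq_perm; first exact: undup_uniq.
  exact: rem_uniq.
by move=> x; rewrite ren_mem // mem_rem_uniq // inE andbC.
Qed.

Lemma ren_size V : uniq V -> b \in V -> a \in V -> a != b ->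
  size (undup [seq ren a b y | y <- V]) = (size V).-1.
Proof. by move=> uV bV aV ab; rewrite (perm_size (ren_perm uV bV aV ab)) size_rem. Qed.

End Ren.

Section CL.
Variable R : realType.
Notation edge := (nat * nat * R)%type.
Implicit Types (E L : seq edge) (e : edge).

Lemma conn_edge E p q : p != q -> conn E p q ->
  exists2 e, e \in E & e.1.1 != e.1.2.
Proof.
move=> + h; elim: h => [x|x y z [e eE h] _ IH xz]; first by rewrite eqxx.
case: (eqVneq x y) => [xy|xy]; first by apply: IH; rewrite -xy.
by exists e => //; case: h => [[-> ->]|[-> ->]]; rewrite // eq_sym.
Qed.

Lemma conn_count n : forall V E, size V = n -> uniq V ->
  (forall e, e \in E -> (e.1.1 \in V) && (e.1.2 \in V)) ->
  (forall p q, p \in V -> q \in V -> conn E p q) ->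
  (n <= (size E).+1)%N.
Proof.
elim: n => [//|n IH] V E sV uV EV cV.
case: n IH sV => [//|n] IH sV.
have p0V : nth 0%N V 0 \in V by rewrite mem_nth // sV.
have p1V : nth 0%N V 1 \in V by rewrite mem_nth // sV.
have p01 : nth 0%N V 0 != nth 0%N V 1 by rewrite nth_uniq // sV.
case: (conn_edge p01 (cV _ _ p0V p1V)) => -[[a b] l] eE /= ab.
move: (EV _ eE) => /andP [/= aV bV].
have pE := perm_to_rem eE.
have sE : (0 < size E)%N by case: (E) eE.
suff : (n.+1 <= (size E).-1.+1)%N by rewrite prednK.
have := IH (undup [seq ren a b y | y <- V]) [seq renE a b e | e <- rem (a, b, l) E].
rewrite size_map size_rem // ren_size // sV; apply=> //.
- exact: undup_uniq.
- move=> e /mapP [e' e'E ->] /=.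
  have e'E2 : e' \in E by apply: mem_rem e'E.
  have /andP[h1 h2] := EV _ e'E2.
  by rewrite !mem_undup !map_f.
- move=> p' q'; rewrite !mem_undup => /mapP [p pV ->] /mapP [q qV ->].
  apply: conn_ren; apply: conn_eqmem (cV _ _ pV qV).
  by move=> z; rewrite (perm_mem pE).
Qed.

End CL.


Section Tree.
Variable R : realType.
Notation edge := (nat * nat * R)%type.
Implicit Types (E L : seq edge) (e : edge).

Definition Eminus E e := [seq x <- E | x != e].

Lemma conn_replace E L p q : (forall x y, adj E x y -> conn L x y) ->
  conn E p q -> conn L p q.
Proof.
move=> h; elim=> [x|x y z /h hxy _ IH]; first exact: conn0.
exact: conn_trans hxy IH.
Qed.

Lemma notuniq_rem (T : eqType) (s : seq T) : ~~ uniq s -> exists x, x \in rem x s.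
Proof.
elim: s => [//|x s IH] /=; rewrite negb_and negbK => /orP [xs|/IH [y ys]].
  by exists x; rewrite eqxx.
exists y; rewrite /=; case: (eqVneq x y) => [xy|xy]; first by subst; exact: mem_rem ys.
by rewrite inE ys orbT.
Qed.

Variables (V : seq nat) (E : seq edge).
Hypothesis tree : is_metrized_tree (MGraph V E).

Lemma tree_uniqV : uniq V. Proof. by case: tree. Qed.
Lemma tree_sizeE : size E = (size V).-1. Proof. by case: tree. Qed.
Lemma tree_edge e : e \in E ->
  [&& e.1.1 \in V, e.1.2 \in V, e.1.1 != e.1.2 & 0 < e.2].
Proof. by case: tree => _ /allP h _ _ /h. Qed.

Lemma tree_conn p q : p \in V -> q \in V -> conn E p q.
Proof.
case: tree => _ _ h _ pV qV; case: (h p q pV qV) => s hs.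
apply: conn_sub (is_walk_conn hs) => z /mapP [i iS ->].
by apply: mem_nth; have /allP := is_walk_idx hs; apply.
Qed.

Lemma tree_small L : {subset L <= E} -> (size L < size E)%N ->
  ~ (forall p q, p \in V -> q \in V -> conn L p q).
Proof.
move=> sub sL cL.
have := conn_count erefl tree_uniqV _ cL.
have -> : (size V = (size E).+1)%N.
  by move: sL; rewrite tree_sizeE; case: (size V).
rewrite ltnS leqNgt sL => /(_ _) h; apply: notF; apply: h => e /sub /tree_edge.
by case/and4P=> -> ->.
Qed.

Lemma tree_uniqE : uniq E.
Proof.
apply/negPn/negP => /notuniq_rem [e eE].
have eE' : e \in E by apply: mem_rem eE.
apply: (tree_small (L := rem e E)).
- by move=> z /mem_rem.
- by rewrite size_rem //; case: (E) eE'.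
move=> p q pV qV; apply: conn_replace (tree_conn pV qV) => x y [e' e'E h].
apply: conn1; exists e' => //.
by case: (eqVneq e' e) => [->|ne]; [|apply: rem_mem].
Qed.

Lemma bridge e : e \in E -> ~ conn (Eminus E e) e.1.1 e.1.2.
Proof.
move=> eE c; apply: (tree_small (L := Eminus E e)).
- by move=> z; rewrite mem_filter => /andP [].
- have c1 : (0 < count (pred1 e) E)%N by rewrite -has_count; apply/hasP; exists e => //=.
  rewrite size_filter -[X in (_ < X)%N](count_predC (pred1 e)).
  rewrite -addn1 [X in (_ <= X)%N]addnC; exact: leq_add.
move=> p q pV qV; apply: conn_replace (tree_conn pV qV) => x y [e' e'E h].
case: (eqVneq e' e) => [ee|ne].
  subst e'; case: h => [[<- <-] //|[<- <-]]; exact: conn_sym.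
by apply: conn1; exists e' => //; rewrite mem_filter ne.
Qed.

Lemma side_split e p : e \in E -> p \in V ->
  conn (Eminus E e) e.1.1 p \/ conn (Eminus E e) e.1.2 p.
Proof.
move=> eE pV; have aV : e.1.1 \in V by case/and4P: (tree_edge eE).
suff gen : forall u w, conn E u w ->
    conn (Eminus E e) e.1.1 u \/ conn (Eminus E e) e.1.2 u ->
    conn (Eminus E e) e.1.1 w \/ conn (Eminus E e) e.1.2 w.
  by apply: gen (tree_conn aV pV) _; left; exact: conn0.
move=> u w; elim=> // x y z [e' e'E h] _ IH hx.
apply: IH; case: (eqVneq e' e) => [ee|ne].
  subst e'; case: h => [[_ <-]|[_ <-]]; [right|left]; exact: conn0.
have hxy : conn (Eminus E e) x y by apply: conn1; exists e' => //; rewrite mem_filter ne.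
by case: hx => hx; [left|right]; apply: conn_trans hxy.
Qed.

Definition alpha e x := `[< conn (Eminus E e) e.1.1 x >].

Lemma conn_alpha e p q : e \in E -> p \in V -> q \in V ->
  conn (Eminus E e) p q <-> alpha e p = alpha e q.
Proof.
move=> eE pV qV; rewrite /alpha; split.
  move=> c; apply/idP/idP => /asboolP h; apply/asboolP.
    exact: conn_trans h c.
  exact: conn_trans h (conn_sym c).
case: (side_split eE pV) => hp; case: (side_split eE qV) => hq.
- by move=> _; apply: conn_trans (conn_sym hp) hq.
- move/asboolP: (hp) => -> /esym /asboolP h.
  by exfalso; apply: (bridge eE); apply: conn_trans h (conn_sym hq).
- move/asboolP: (hq) => -> /asboolP h.
  by exfalso; apply: (bridge eE); apply: conn_trans h (conn_sym hp).
- by move=> _; apply: conn_trans (conn_sym hp) hq.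
Qed.

End Tree.


Lemma sum_sub (R : realType) (T : eqType) (s1 s2 : seq T) (F : T -> R) :
  uniq s1 -> {subset s1 <= s2} -> (forall x, x \in s2 -> 0 <= F x) ->
  \sum_(x <- s1) F x <= \sum_(x <- s2) F x.
Proof.
elim: s1 s2 => [|x s1 IH] s2 /=.
  by move=> _ _ h; rewrite big_nil big_seq; apply: sumr_ge0 => y /h.
case/andP=> xs1 u sub h.
have xs2 : x \in s2 by apply: sub; rewrite mem_head.
rewrite big_cons (perm_big _ (perm_to_rem xs2)) big_cons lerD2l.
apply: IH => //.
  move=> y ys1; apply: rem_mem; first by apply: contraNneq xs1 => <-.
  by apply: sub; rewrite inE ys1 orbT.
by move=> y /mem_rem; apply: h.
Qed.

Lemma notuniq_split (T : eqType) (s : seq T) : ~~ uniq s ->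
  exists s1 x s2 s3, s = s1 ++ x :: s2 ++ x :: s3.
Proof.
elim: s => [//|x s IH] /=; rewrite negb_and negbK => /orP [xs|/IH [s1 [y [s2 [s3 ->]]]]].
  by case/splitPr: xs => s2 s3; exists [::], x, s2, s3.
by exists (x :: s1), y, s2, s3.
Qed.

Section Dist.
Variable R : realType.
Notation edge := (nat * nat * R)%type.
Variables (V : seq nat) (E : seq edge).
Hypothesis tree : is_metrized_tree (MGraph V E).

Definition S p q := \sum_(e <- E | ~~ `[< conn (Eminus E e) p q >]) e.2.

Lemma walk_lenE s : walk_len E s = \sum_(e <- [seq nth (edge0 R) E i | i <- s]) e.2.
Proof. by rewrite /walk_len big_map. Qed.

Lemma walk_mem p q s : is_walk E p q s -> {subset [seq nth (edge0 R) E i | i <- s] <= E}.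
Proof.
move=> hw z /mapP [i iS ->]; apply: mem_nth.
by have /allP := is_walk_idx hw; apply.
Qed.

Lemma len_ge0 e : e \in E -> 0 <= e.2.
Proof. by move/(tree_edge tree)/and4P => [_ _ _ /ltW]. Qed.

Lemma S_le_walk p q s : is_walk E p q s -> S p q <= walk_len E s.
Proof.
move=> hw; rewrite /S -big_filter walk_lenE; apply: sum_sub.
- exact/filter_uniq/(tree_uniqE tree).
- move=> e; rewrite mem_filter => /andP [/asboolPn nc eE]; apply/negPn/negP => ne.
  apply: nc; apply: conn_sub (is_walk_conn hw) => z zs.
  rewrite mem_filter (walk_mem hw zs) andbT; by apply: contraNneq ne => <-.
- by move=> x /(walk_mem hw); exact: len_ge0.
Qed.

Lemma nth_inj s p q : is_walk E p q s -> {in s &, injective (nth (edge0 R) E)}.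
Proof.
move=> hw i j iS jS /eqP; have /allP h := is_walk_idx hw.
by rewrite nth_uniq ?(tree_uniqE tree) ?h // => /eqP.
Qed.

Lemma walk_le_S p q s : is_walk E p q s -> uniq s -> walk_len E s <= S p q.
Proof.
move=> hw us; rewrite /S -big_filter walk_lenE; apply: sum_sub.
- by rewrite map_inj_in_uniq //; exact: nth_inj hw.
- move=> e /mapP [j jS ->]; rewrite mem_filter (walk_mem hw (map_f _ jS)) andbT.
  apply/asboolPn => c.
  move: hw us; case/splitPr: jS => s1 s2 hw.
  have /allP hidx := is_walk_idx hw; move: hw.
  rewrite cat_uniq /= => /is_walk_cat [m [h1 /(@is_walk_cat R E m q [:: j] s2) [m' [h2 h3]]]].
  case/and4P=> _ /norP [j1 _] j2 _.
  have jS : j \in s1 ++ j :: s2 by rewrite mem_cat mem_head orbT.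
  have sub : forall t, j \notin t -> {subset t <= s1 ++ j :: s2} ->
      {subset [seq nth (edge0 R) E i | i <- t] <= Eminus E (nth (edge0 R) E j)}.
    move=> t jt ts z /mapP [i it ->]; rewrite mem_filter.
    have iS := ts _ it; rewrite (mem_nth _ (hidx _ iS)) andbT.
    rewrite nth_uniq ?hidx ?(tree_uniqE tree) //; by apply: contraNneq jt => <-.
  have c1 := conn_sub (sub _ j1 (fun i h => etrans (mem_cat _ _ _) (introT orP (or_introl h)))) (is_walk_conn h1).
  have c3 : conn (Eminus E (nth (edge0 R) E j)) m' q.
    apply: conn_sub (is_walk_conn h3); apply: sub j2 _ => i h.
    by rewrite mem_cat inE h !orbT.
  have c2 : conn (Eminus E (nth (edge0 R) E j)) m m'.
    apply: conn_trans (conn_sym c1) _; exact: conn_trans c (conn_sym c3).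
  have jE : nth (edge0 R) E j \in E by rewrite mem_nth ?hidx.
  apply: (bridge tree jE); case/is_walk1: h2 => _ [[e1 e2]|[e1 e2]]; rewrite e1 e2 //.
  exact: conn_sym.
- by move=> x; rewrite mem_filter => /andP [_]; exact: len_ge0.
Qed.

Lemma shorten p q s : is_walk E p q s -> exists s', is_walk E p q s' /\ uniq s'.
Proof.
move: {2}(size s) (leqnn (size s)) => n; elim: n s p q => [|n IH] s p q.
  by case: s => // _ h; exists [::].
move=> sn hw; case: (boolP (uniq s)) => [us|/notuniq_split [s1 [j [s2 [s3 e]]]]].
  by exists s.
subst s; move: hw => /is_walk_cat [m1 [h1]].
move=> /(@is_walk_cat R E m1 q [:: j] (s2 ++ j :: s3)) [m2 [hj1]].
move=> /is_walk_cat [m3 [h2]].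
move=> /(@is_walk_cat R E m3 q [:: j] s3) [m4 [hj2 h3]].
have hj1' := hj1; have hj2' := hj2.
case/is_walk1: hj1 => _ H1; case/is_walk1: hj2 => _ H2.
move: sn; rewrite !size_cat /= size_cat /= => sn.
case: (eqVneq m2 m3) => [e23|/eqP n23].
  have e14 : m1 = m4.
    by case: H1 H2 => [[? ?]|[? ?]] [[? ?]|[? ?]]; congruence.
  subst m4; apply: (IH (s1 ++ s3)); first by rewrite size_cat; lia.
  by apply/is_walk_cat; exists m1.
have [e13 e24] : m3 = m1 /\ m4 = m2.
  by case: H1 H2 => [[? ?]|[? ?]] [[? ?]|[? ?]]; split; congruence.
subst m3 m4; apply: (IH (s1 ++ j :: s3)); first by rewrite size_cat /=; lia.
apply/is_walk_cat; exists m1; split => //.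
by apply/(@is_walk_cat R E m1 q [:: j] s3); exists m2.
Qed.

Lemma dist_S p q : p \in V -> q \in V -> dist (MGraph V E) p q = S p q.
Proof.
move=> pV qV; case: (tree) => _ _ hc _; case: (hc p q pV qV) => s0 h0.
case: (shorten h0) => s [hs us].
have eqS : walk_len E s = S p q.
  by apply/eqP; rewrite eq_le walk_le_S // S_le_walk.
rewrite /dist /=.
set X := (X in inf X).
have XS : X (S p q) by exists s; rewrite eqS.
have lb : lbound X (S p q) by move=> x [t [ht ->]]; exact: S_le_walk ht.
apply/eqP; rewrite eq_le; apply/andP; split.
  by apply: ge_inf XS; exists (S p q).
by apply: lb_le_inf lb; exists (S p q).
Qed.

End Dist.


Section Count.
Variable R : realType.

Lemma sum_if (T : Type) (s : seq T) (Q : pred T) (c1 c0 : R) :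
  \sum_(x <- s) (if Q x then c1 else c0) =
  (count Q s)%:R * c1 + (count (predC Q) s)%:R * c0.
Proof.
elim: s => [|x s IH]; first by rewrite big_nil !mul0r addr0.
rewrite big_cons IH /=; case: (Q x) => /=; rewrite !natrD; ring.
Qed.

Lemma pair_count (T : Type) (s : seq T) (P : pred T) :
  \sum_(p <- s) \sum_(q <- s) ((P p != P q) : nat)%:R =
  2 * (count P s)%:R * ((size s)%:R - (count P s)%:R) :> R.
Proof.
have inner b : \sum_(q <- s) ((b != P q) : nat)%:R =
    (if b then (count (predC P) s)%:R else (count P s)%:R) :> R.
  elim: s => [|x s IH]; first by rewrite big_nil; case: b.
  rewrite big_cons IH /= {IH}; case: b; case: (P x) => /=; rewrite ?natrD ?add0r //; ring.
rewrite (eq_bigr _ (fun p _ => inner (P p))) sum_if.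
have := count_predC P s; move: (count P s) (count (predC P) s) => c d <-.
rewrite natrD; ring.
Qed.

End Count.

Section WTree.
Variable R : realType.
Notation edge := (nat * nat * R)%type.
Variables (V : seq nat) (E : seq edge).
Hypothesis tree : is_metrized_tree (MGraph V E).

Lemma S_alpha p q : p \in V -> q \in V ->
  S E p q = \sum_(e <- E) e.2 * ((alpha E e p != alpha E e q) : nat)%:R.
Proof.
move=> pV qV; rewrite /S big_mkcond big_seq [RHS]big_seq; apply: eq_bigr => e eE.
have ca := conn_alpha tree eE pV qV.
case: (eqVneq (alpha E e p) (alpha E e q)) => h.
  have -> : `[< conn (Eminus E e) p q >] = true by apply/asboolP; apply/ca.
  by rewrite /= mulr0.
have -> : `[< conn (Eminus E e) p q >] = false.
  by apply/asboolP => /ca /eqP; rewrite (negbTE h).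
by rewrite /= mulr1.
Qed.

Lemma W_tree : wiener (MGraph V E) =
  \sum_(e <- E) e.2 * (2^-1 * \sum_(p <- V) \sum_(q <- V)
        ((alpha E e p != alpha E e q) : nat)%:R).
Proof.
rewrite /wiener /=.
under eq_big_seq => p pV do under eq_big_seq => q qV do
  rewrite (dist_S tree pV qV) (S_alpha pV qV).
rewrite [RHS](eq_bigr (fun e => 2^-1 * (e.2 * \sum_(p <- V) \sum_(q <- V)
        ((alpha E e p != alpha E e q) : nat)%:R))); last by move=> e _; rewrite mulrCA.
rewrite -big_distrr /=; congr (_ * _).
under eq_bigr => p _ do rewrite exchange_big /=.
rewrite exchange_big /=; apply: eq_bigr => e _.
rewrite big_distrr /=; apply: eq_bigr => p _.
by rewrite big_distrr.
Qed.

Lemma restrict (L : seq edge) (Q : pred nat) p q :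
  (forall x y, adj L x y -> Q x -> Q y) -> conn L p q -> Q p ->
  conn [seq y <- L | Q y.1.2] p q.
Proof.
move=> cl; elim=> [x|x y z hxy _ IH] Qx; first exact: conn0.
have Qy := cl _ _ hxy Qx.
apply: connS (IH Qy); case: hxy => e' e'L h; exists e' => //.
by rewrite mem_filter e'L andbT; case: h => [[_ ->]|[-> _]].
Qed.

Lemma factX e : e \in E ->
  count (fun y => (y != e) && alpha E e y.1.2) E = (count (alpha E e) V).-1 /\
  count (fun y => (y != e) && ~~ alpha E e y.1.2) E = (count (predC (alpha E e)) V).-1.
Proof.
move=> eE; set P := alpha E e.
have clP : forall x y, adj (Eminus E e) x y -> P x -> P y.
  move=> x y hxy /asboolP h; apply/asboolP; exact: conn_trans h (conn1 hxy).
have clN : forall x y, adj (Eminus E e) x y -> (predC P) x -> (predC P) y.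
  move=> x y hxy /= /negP nx; apply/negP => Py; apply: nx; exact: clP (adj_sym hxy) Py.
have uV := tree_uniqV tree.
have key : forall Q : pred nat, (forall x y, adj (Eminus E e) x y -> Q x -> Q y) ->
    (forall p q, Q p -> Q q -> p \in V -> q \in V -> conn (Eminus E e) p q) ->
    (size [seq x <- V | Q x] <= (size [seq y <- Eminus E e | Q y.1.2]).+1)%N.
  move=> Q cl cc; apply: (conn_count erefl (filter_uniq _ uV)).
    move=> y; rewrite mem_filter => /andP [Qy]; rewrite mem_filter => /andP [ye yE].
    case/and4P: (tree_edge tree yE) => y1 y2 _ _.
    rewrite !mem_filter y1 y2 Qy !andbT /=.
    by apply: cl Qy; exists y; [rewrite mem_filter ye yE | right].
  move=> p q; rewrite !mem_filter => /andP [Qp pV] /andP [Qq qV].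
  by apply: restrict => //; apply: cc.
have hA := key P clP.
have hB := key (predC P) clN.
have eV : e.1.1 \in V /\ e.1.2 \in V by case/and4P: (tree_edge tree eE).
have ccA : forall p q, P p -> P q -> p \in V -> q \in V -> conn (Eminus E e) p q.
  by move=> p q Pp Pq pV qV; apply/(conn_alpha tree eE pV qV); rewrite /P in Pp Pq; rewrite Pp Pq.
have ccB : forall p q, (predC P) p -> (predC P) q -> p \in V -> q \in V -> conn (Eminus E e) p q.
  move=> p q /negbTE Pp /negbTE Pq pV qV; apply/(conn_alpha tree eE pV qV).
  by rewrite /P in Pp Pq; rewrite Pp Pq.
have hA' := hA ccA; have hB' := hB ccB.
have fA : size [seq y <- Eminus E e | P y.1.2] = count (fun y => (y != e) && P y.1.2) E.
  by rewrite size_filter /Eminus count_filter; apply: eq_count => y; rewrite /= andbC.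
have fB : size [seq y <- Eminus E e | (predC P) y.1.2] = count (fun y => (y != e) && ~~ P y.1.2) E.
  by rewrite size_filter /Eminus count_filter; apply: eq_count => y; rewrite /= andbC.
rewrite fA fB !size_filter in hA' hB'.
have c1 : (0 < count P V)%N.
  rewrite -has_count; apply/hasP; exists e.1.1; first by case: eV.
  by apply/asboolP; exact: conn0.
have c2 : (0 < count (predC P) V)%N.
  rewrite -has_count; apply/hasP; exists e.1.2; first by case: eV.
  by rewrite /= /P /alpha; apply/negP => /asboolP; apply: (bridge tree eE).
have sV := count_predC P V.
have split : forall (a b : pred edge) s, count (fun y => a y && b y) s + count (fun y => a y && ~~ b y) s = count a s.
  move=> a b; elim=> [//|y s IH] /=; rewrite -IH; case: (a y); case: (b y) => /=; lia.
have sEm := split (fun y => y != e) (fun y => P y.1.2) E.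
have sEm2 : count (fun y => y != e) E = (size E).-1.
  have := count_predC (pred1 e) E; rewrite count_uniq_mem ?(tree_uniqE tree) // eE.
  by move=> <-; rewrite add1n.
have sE := tree_sizeE tree.
move: hA' hB' sEm sEm2 c1 c2 sV sE.
move: (count P V) (count (predC P) V) (count (fun y => (y != e) && P y.1.2) E)
  (count (fun y => (y != e) && ~~ P y.1.2) E) (count (fun y => y != e) E) (size V) (size E).
move=> nA nB eA eB m v ne; lia.
Qed.

End WTree.


Lemma map_uniq_inj (T1 T2 : eqType) (f : T1 -> T2) (s : seq T1) :
  uniq (map f s) -> {in s &, injective f}.
Proof.
elim: s => [//|x s IH] /= /andP [fx u] y z.
rewrite !inE => /orP [/eqP ->|ys] /orP [/eqP ->|zs] // h.
- by move: fx; rewrite h map_f.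
- by move: fx; rewrite -h map_f.
- exact: IH.
Qed.

Section Contract.
Variable R : realType.
Notation edge := (nat * nat * R)%type.
Variables (V : seq nat) (E : seq edge).
Hypothesis tree : is_metrized_tree (MGraph V E).
Variables (j a b : nat) (l : R).
Hypothesis hj : (j < size E)%N.
Hypothesis ej : nth (edge0 R) E j = (a, b, l).

Let L := take j E ++ drop j.+1 E.
Let V' := undup [seq ren a b x | x <- V].
Let E' := [seq renE a b e | e <- L].

Lemma contractE : contract (MGraph V E) j = MGraph V' E'.
Proof. by rewrite /contract /edge_at /= ej. Qed.

Lemma permE : perm_eq E ((a, b, l) :: L).
Proof.
rewrite -{1}(cat_take_drop j E) (drop_nth (edge0 R) hj) ej /L.
by rewrite -cat1s perm_catCA.
Qed.

Lemma memE x : (x \in E) = (x \in (a, b, l) :: L).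
Proof. by rewrite (perm_mem permE). Qed.

Lemma ejE : (a, b, l) \in E.
Proof. by rewrite memE mem_head. Qed.

Lemma abV : [/\ a \in V, b \in V & a != b].
Proof. by case/and4P: (tree_edge tree ejE) => /= -> -> ->. Qed.

Lemma uniqL : uniq ((a, b, l) :: L).
Proof. by rewrite -(perm_uniq permE) (tree_uniqE tree). Qed.

Lemma sizeL : size L = (size E).-1.
Proof. by rewrite (perm_size permE). Qed.

Lemma memV' x : (x \in V') = (x \in V) && (x != b).
Proof. by case: abV => aV bV ab; rewrite ren_mem. Qed.

Lemma sizeV' : size V' = (size V).-1.
Proof. by case: abV => aV bV ab; rewrite ren_size // (tree_uniqV tree). Qed.

Lemma ren_id x : x != b -> ren a b x = x.
Proof. by rewrite /ren => /negbTE ->. Qed.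

Lemma contract_tree : is_metrized_tree (MGraph V' E').
Proof.
case: abV => aV bV ab.
split => /=.
- exact: undup_uniq.
- apply/allP => e' /mapP [e eL ->] /=.
  have eE : e \in E by rewrite memE inE eL orbT.
  case/and4P: (tree_edge tree eE) => e1 e2 e12 ->.
  rewrite !memV' andbT.
  have neb : forall x, x \in V -> (ren a b x \in V) && (ren a b x != b).
    by move=> x xV; rewrite /ren; case: eqP => [_|/eqP]; rewrite ?aV ?xV ?ab.
  rewrite neb // neb //=.
  apply/negP => /eqP h.
  have ne : e != (a, b, l) by apply/eqP => ee; move: uniqL; rewrite /= -ee eL.
  apply: (bridge tree ejE); rewrite /=.
  have ad : adj (Eminus E (a, b, l)) e.1.1 e.1.2.
    by exists e; [rewrite mem_filter ne eE | left].
  move: h e12; rewrite /ren.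
  case: eqP => [e1b|e1b]; case: eqP => [e2b|e2b].
  + by rewrite e1b e2b eqxx.
  + move=> ea _; rewrite e1b -ea in ad; exact: conn_sym (conn1 ad).
  + move=> ae _; rewrite e2b ae in ad; exact: conn1 ad.
  + by move=> ->; rewrite eqxx.
- move=> p' q'; rewrite !mem_undup => /mapP [p pV ->] /mapP [q qV ->].
  apply: conn_walk; apply: conn_ren.
  by apply: conn_eqmem (tree_conn tree pV qV) => z; rewrite memE.
- by rewrite size_map sizeL sizeV' (tree_sizeE tree).
Qed.

Lemma alpha_contract e p : e \in L -> p \in V' ->
  alpha E' (renE a b e) p = alpha E e p.
Proof.
move=> eL pV'.
have uE' : uniq E' := tree_uniqE contract_tree.
have inj := map_uniq_inj uE'.
have ne : e != (a, b, l) by apply/eqP => ee; move: uniqL; rewrite /= -ee eL.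
have pb : p != b by move: pV'; rewrite memV' => /andP [].
set L3 := [seq y <- L | y != e].
have hm : Eminus E' (renE a b e) =i [seq renE a b y | y <- L3].
  move=> x; rewrite /Eminus /E' mem_filter; apply/andP/mapP.
    case=> xne /mapP [y yL xy]; exists y => //; rewrite mem_filter yL andbT.
    by apply: contraNneq xne => ye; rewrite xy ye.
  case=> y; rewrite mem_filter => /andP [ye yL] ->; split; last exact: map_f.
  by apply/negP => /eqP /(inj _ _ yL eL) ye2; rewrite ye2 eqxx in ye.
have hm2 : (a, b, l) :: L3 =i Eminus E e.
  move=> x; rewrite mem_filter memE !inE mem_filter.
  by case: (eqVneq x (a, b, l)) => [->|] //=; rewrite eq_sym ne.
rewrite /alpha; apply/idP/idP => /asboolP h; apply/asboolP.
  apply: conn_eqmem hm2 _; apply: (ren_conn_inv l (conn_eqmem hm h)) => //.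
  exact: ren_id.
apply: conn_eqmem (fun x => esym (hm x)) _.
by have := conn_ren (conn_eqmem (fun x => esym (hm2 x)) h); rewrite (ren_id pb).
Qed.

Lemma W_contract : wiener (MGraph V' E') = \sum_(e <- L) e.2 *
  ((count (alpha E e) (rem b V))%:R * ((size V)%:R - 1 - (count (alpha E e) (rem b V))%:R)).
Proof.
case: abV => aV bV ab.
rewrite (W_tree contract_tree) /= big_map; apply: eq_big_seq => e eL /=.
congr (_ * _).
rewrite (eq_big_seq (fun p => \sum_(q <- V') ((alpha E e p != alpha E e q) : nat)%:R)); last first.
  by move=> p pV; apply: eq_big_seq => q qV; rewrite !alpha_contract.
have pr := ren_perm (tree_uniqV tree) bV aV ab.
under eq_bigr => p _ do rewrite (perm_big _ pr).
rewrite (perm_big _ pr) pair_count size_rem //.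
have : (0 < size V)%N by case: (V) bV.
case: (size V) => [//|n] _; rewrite succnK -natr1.
by field.
Qed.

Lemma len_contract : total_length (MGraph V' E') = total_length (MGraph V E) - l.
Proof.
rewrite /total_length /= big_map (perm_big _ permE) big_cons /=.
by rewrite addrC addrK.
Qed.

End Contract.


Section Sum.
Variable R : realType.
Notation edge := (nat * nat * R)%type.

Lemma sum_if3 (T : Type) (s : seq T) (P Q : pred T) (c1 c0 : R) :
  \sum_(x <- s) (if P x then (if Q x then c1 else c0) else 0) =
  (count (fun x => P x && Q x) s)%:R * c1 + (count (fun x => P x && ~~ Q x) s)%:R * c0.
Proof.
elim: s => [|x s IH]; first by rewrite big_nil !mul0r addr0.
rewrite big_cons IH /=; case: (P x); case: (Q x) => /=; rewrite ?natrD ?add0r; ring.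
Qed.

Variables (V : seq nat) (E : seq edge).
Hypothesis tree : is_metrized_tree (MGraph V E).

Definition gfun (e y : edge) : R :=
  e.2 * (((count (alpha E e) V)%:R - (alpha E e y.1.2 : nat)%:R) *
        ((size V)%:R - 1 - ((count (alpha E e) V)%:R - (alpha E e y.1.2 : nat)%:R))).

Lemma Wj (j : 'I_(size E)) :
  wiener (contract (MGraph V E) j) =
  \sum_(e <- E) (if e != nth (edge0 R) E j then gfun e (nth (edge0 R) E j) else 0).
Proof.
case eq: (nth (edge0 R) E j) => [[a b] l].
have hj := ltn_ord j.
rewrite (contractE V eq) (W_contract tree hj eq).
have [aV bV ab] := abV tree hj eq.
rewrite (perm_big _ (permE hj eq)) big_cons eqxx /= add0r.
have uL := uniqL tree hj eq.
apply: eq_big_seq => e eL.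
have -> : e != (a, b, l) by apply/eqP => ee; move: uL; rewrite /= -ee eL.
rewrite /gfun /=; congr (_ * (_ * (_ - _ - _))); rewrite count_rem bV /=;
  case: (boolP (alpha E e b)) => ab' /=; rewrite ?subn0 ?subr0 //;
  rewrite natrB //; rewrite -has_count; apply/hasP; by exists b.
Qed.

Lemma alpha_pos e : e \in E ->
  (0 < count (alpha E e) V)%N /\ (0 < count (predC (alpha E e)) V)%N.
Proof.
move=> eE; have eV : e.1.1 \in V /\ e.1.2 \in V by case/and4P: (tree_edge tree eE).
split.
  rewrite -has_count; apply/hasP; exists e.1.1; first by case: eV.
  by apply/asboolP; exact: conn0.
rewrite -has_count; apply/hasP; exists e.1.2; first by case: eV.
by rewrite /= /alpha; apply/negP => /asboolP; apply: (bridge tree eE).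
Qed.

Lemma W_count : wiener (MGraph V E) =
  \sum_(e <- E) e.2 * ((count (alpha E e) V)%:R * ((size V)%:R - (count (alpha E e) V)%:R)).
Proof.
rewrite (W_tree tree); apply: eq_bigr => e _; rewrite pair_count.
by congr (_ * _); field.
Qed.

Lemma sum_contract :
  \sum_(j < size E) wiener (contract (MGraph V E) j) =
  ((size V)%:R - 4) * wiener (MGraph V E) + (size V)%:R * total_length (MGraph V E).
Proof.
under eq_bigr => j _ do rewrite Wj.
rewrite -(big_mkord xpredT (fun j => \sum_(e <- E)
   (if e != nth (edge0 R) E j then gfun e (nth (edge0 R) E j) else 0))).
rewrite -(big_nth (edge0 R) xpredT (fun y => \sum_(e <- E) (if e != y then gfun e y else 0))).
rewrite exchange_big /= W_count /total_length /= big_distrr /= big_distrr /= -big_split /=.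
apply: eq_big_seq => e eE.
have [c1 c2] := alpha_pos eE.
have [f1 f2] := factX tree eE.
have sV := count_predC (alpha E e) V.
rewrite (eq_bigr (fun y => if y != e then (if alpha E e y.1.2 then
    e.2 * (((count (alpha E e) V)%:R - 1) * ((size V)%:R - 1 - ((count (alpha E e) V)%:R - 1))) else
    e.2 * (((count (alpha E e) V)%:R - 0) * ((size V)%:R - 1 - ((count (alpha E e) V)%:R - 0)))) else 0)); last first.
  by move=> y _; rewrite eq_sym /gfun; case: (alpha E e y.1.2).
rewrite sum_if3 f1 f2.
move: (count (alpha E e) V) c1 c2 sV => n c1 c2 sV.
move: c2 sV; rewrite -(subnK (c1 : (1 <= n)%N)).
move: (n - 1)%N => k; rewrite addn1.
move: (count (predC (alpha E e)) V) => m; case: m => [//|m] _ <- /=.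
rewrite !natrD; ring.
Qed.

End Sum.


Section Main.
Variable R : realType.

Definition cc (v k : nat) : R :=
  ((v%:R) ^+ 2 - (k + 2)%:R * v%:R + k%:R - 1) * k%:R
    / ((v%:R - k%:R - 2) * (v%:R - k%:R - 3)).

Lemma contract_props (G : mgraph R) (j : 'I_(size (medges G))) :
  is_metrized_tree G ->
  [/\ is_metrized_tree (contract G j), nverts (contract G j) = (nverts G).-1
    & total_length (contract G j) = total_length G - (nth (edge0 R) (medges G) j).2].
Proof.
case: G j => V E j tree /=.
case eq: (nth (edge0 R) E j) => [[a b] l].
have hj := ltn_ord j.
rewrite (contractE V eq); split.
- exact: (contract_tree tree hj eq).
- by rewrite /nverts /= (sizeV' tree hj eq).
- by rewrite (len_contract V hj eq).
Qed.

Lemma ct_tree (G : mgraph R) (j : 'I_(size (medges G))) :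
  is_metrized_tree G -> is_metrized_tree (contract G j).
Proof. by move=> t; case: (contract_props j t). Qed.
Lemma ct_nv (G : mgraph R) (j : 'I_(size (medges G))) :
  is_metrized_tree G -> nverts (contract G j) = (nverts G).-1.
Proof. by move=> t; case: (contract_props j t). Qed.
Lemma ct_len (G : mgraph R) (j : 'I_(size (medges G))) :
  is_metrized_tree G ->
  total_length (contract G j) = total_length G - (nth (edge0 R) (medges G) j).2.
Proof. by move=> t; case: (contract_props j t). Qed.

Lemma sum_len (V : seq nat) (E : seq (nat * nat * R)) :
  is_metrized_tree (MGraph V E) -> (0 < size V)%N ->
  \sum_(j < size E) total_length (contract (MGraph V E) j) =
  ((size V)%:R - 2) * total_length (MGraph V E).
Proof.
move=> tree sV.
under eq_bigr => j _ do rewrite (@ct_len (MGraph V E) j tree).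
rewrite sumrB sumr_const card_ord.
rewrite -(big_mkord xpredT (fun j => (nth (edge0 R) (medges (MGraph V E)) j).2)) /=.
rewrite -(big_nth (edge0 R) xpredT (fun e : nat * nat * R => e.2)) /= (tree_sizeE tree).
rewrite /total_length /=; case: (size V) sV => [//|n] _ /=.
by rewrite -mulr_natr -natr1; ring.
Qed.

Lemma main k : forall G : mgraph R, is_metrized_tree G -> (k + 4 <= nverts G)%N ->
  iter_contr_sum k G = ((nverts G - 4) ^_ k)%:R * (wiener G + cc (nverts G) k * total_length G).
Proof.
elim: k => [|k IH] G tree hv.
  by rewrite /= ffactn0 /cc mulr0 !mul0r addr0 mul1r.
case: G tree hv => V E tree hv /=.
have hv' : forall j : 'I_(size E), (k + 4 <= nverts (contract (MGraph V E) j))%N.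
  by move=> j; rewrite (@ct_nv (MGraph V E) j tree) /nverts /=; move: hv; rewrite /nverts /=; lia.
under eq_bigr => j _ do rewrite (IH _ (@ct_tree (MGraph V E) j tree) (hv' j)) (@ct_nv (MGraph V E) j tree).
rewrite -big_distrr big_split /= sum_contract //.
set W := wiener _; set T := total_length (MGraph V E).
rewrite -big_distrr /= sum_len //; last first.
  by move: hv; rewrite /nverts /=; lia.
rewrite -/T.
move: hv; rewrite /nverts /= => hv.
rewrite ffactnS.
have -> : ((size V - 4).-1 = (size V).-1 - 4)%N by lia.
move: (((size V).-1 - 4) ^_ k)%N => F.
have [t ->] : exists t, size V = (t + k + 5)%N by exists (size V - (k + 5))%N; lia.
have -> : ((t + k + 5).-1 = t + k + 4)%N by lia.
have -> : ((t + k + 5) - 4 = t + k + 1)%N by lia.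
rewrite /cc natrM !natrD.
have t0 := ler0n R t.
have t1 : t%:R + 1 != 0 :> R by apply: lt0r_neq0; lra.
have t2 : t%:R + 2 != 0 :> R by apply: lt0r_neq0; lra.
field; have k0 := ler0n R k.
by apply/andP; split; apply: lt0r_neq0; lra.
Qed.

End Main.

End Aux.
Import Aux.

Theorem theorem4p4 (R : realType) (G : mgraph R) :
  is_metrized_tree G -> (5 <= nverts G)%N ->
  (forall k : nat, (1 <= k <= nverts G - 4)%N ->
     wiener G =
       ((nverts G - 4 - k)`!)%:R / ((nverts G - 4)`!)%:R * iter_contr_sum k G
       - ((nverts G)%:R ^+ 2 - (k + 2)%:R * (nverts G)%:R + k%:R - 1) * k%:R
         / (((nverts G)%:R - k%:R - 2) * ((nverts G)%:R - k%:R - 3))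
         * total_length G)
  /\
  wiener G =
    ((nverts G - 4)`!)%:R^-1 * iter_contr_sum (nverts G - 4) G
    - (3 * (nverts G)%:R - 5) * ((nverts G)%:R - 4) / 2 * total_length G.
Proof.
move=> tree hv.
have part1 : forall k : nat, (1 <= k <= nverts G - 4)%N ->
     wiener G =
       ((nverts G - 4 - k)`!)%:R / ((nverts G - 4)`!)%:R * iter_contr_sum k G
       - ((nverts G)%:R ^+ 2 - (k + 2)%:R * (nverts G)%:R + k%:R - 1) * k%:R
         / (((nverts G)%:R - k%:R - 2) * ((nverts G)%:R - k%:R - 3))
         * total_length G.
  move=> k /andP [k1 k2].
  rewrite (@main R k G tree); last by lia.
  have ff := ffact_fact k2.
  have -> : ((nverts G - 4 - k)`!)%:R / ((nverts G - 4)`!)%:R *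
      (((nverts G - 4) ^_ k)%:R * (wiener G + @cc R (nverts G) k * total_length G)) =
      (wiener G + @cc R (nverts G) k * total_length G) :> R.
    rewrite mulrA [X in X * _]mulrAC -natrM mulnC ff mulfV ?mul1r //.
    by rewrite pnatr_eq0 -lt0n fact_gt0.
  by rewrite /cc addrK.
split => //.
have h1 : (1 <= nverts G - 4 <= nverts G - 4)%N by apply/andP; split => //; lia.
rewrite (part1 _ h1) subnn fact0 div1r; congr (_ - _ * _).
have [t ->] : exists t, nverts G = (t + 5)%N by exists (nverts G - 5)%N; lia.
have -> : (t + 5 - 4 = t + 1)%N by lia.
rewrite !natrD; field.
have t0 := ler0n R t.
by apply/andP; split; apply: lt0r_neq0; lra.
Qed.
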